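(* Let $\tau=\lfloor \zeta/(w-1)\rfloor+1$. There exists a constant $C>0$ such that for every $\sigma>(1-2^{-w\tau})^{1/\tau}$, every integer $t\ge 0$ and every initial state $s_0\in[-\zeta,\zeta]\cap\mathbb Z$ of the absorbing system, $\mathbb P(H_t)\le C\sigma^t$.
   Context: Fix a positive integer $\zeta$, integers $w_k$ ($k\in\mathbb Z$) and an integer $w>1$ with $w_k\ge w$ for all $k$, and a policy $\pi:\mathbb Z\to\{-1,0,1\}$. On a probability space $(\Omega,\Sigma,\mathbb P)$ let $\eta_t(k)\sim\mathrm{Bin}(w_k,\tfrac12)$ be independent random variables ($t\in\mathbb N\cup\{0\}$, $k\in\mathbb Z$) and set $W_t(k)=2\eta_t(k)-w_k$. The ''absorbing system'' has state space $\{-\zeta,\dots,\zeta\}\cup\{s_*\}$, where $s_*$ is an extra absorbing state: $S_0=s_0\in[-\zeta,\zeta]\cap\mathbb Z$, and $S_{t+1}=S_t+\pi(S_t)+W_t(S_t)$ if $S_t\in[-\zeta,\zeta]$ and $|S_t+\pi(S_t)+W_t(S_t)|\le\zeta$, while $S_{t+1}=s_*$ otherwise. $H_t$ denotes the survival event $\{S_t\ne s_*\}$. *)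

(* Defs.v *)
From Stdlib Require Import Reals ZArith List Lia Lra.
Open Scope R_scope.

Definition sumL {A : Type} (l : list A) (f : A -> R) : R :=
  fold_right (fun a acc => f a + acc) 0 l.

Definition Zrange (zeta : nat) : list Z :=
  map (fun k => (Z.of_nat k - Z.of_nat zeta)%Z) (seq 0 (2 * zeta + 1)).

Definition in_box (zeta : nat) (s : Z) : bool :=
  (Z.abs s <=? Z.of_nat zeta)%Z.

(* One-step transition probability P(s + pi(s) + W(s) = s') with
   W(s) = 2 eta - w_s, eta ~ Bin(w_s, 1/2). *)
Definition trans (wk : Z -> nat) (pi : Z -> Z) (s s' : Z) : R :=
  sumL (seq 0 (wk s + 1))
    (fun j => if Z.eqb s' (s + pi s + 2 * Z.of_nat j - Z.of_nat (wk s))%Z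
              then Binomial.C (wk s) j / 2 ^ (wk s) else 0).

(* Law of the absorbing system restricted to the non-absorbed states:
   dist t s = P(S_t = s) for s in [-zeta, zeta]; the mass leaving the box
   goes to the absorbing state s_* and is dropped. *)
Fixpoint dist (zeta : nat) (wk : Z -> nat) (pi : Z -> Z) (s0 : Z)
    (t : nat) (s : Z) : R :=
  match t with
  | O => if Z.eqb s s0 then 1 else 0
  | S t' => if in_box zeta s
            then sumL (Zrange zeta)
                   (fun u => dist zeta wk pi s0 t' u * trans wk pi u s)
            else 0
  end.

(* P(H_t) = P(S_t <> s_* ) *)
Definition survival (zeta : nat) (wk : Z -> nat) (pi : Z -> Z) (s0 : Z)
    (t : nat) : R :=
  sumL (Zrange zeta) (fun s => dist zeta wk pi s0 t s).

(* Main.v *)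
Require Import Defs.
From Stdlib Require Import Reals ZArith List Lia Lra.
Import Defs.
Open Scope R_scope.


Lemma sumL_nil {A} (f : A -> R) : sumL nil f = 0.
Proof. reflexivity. Qed.
Lemma sumL_cons {A} (a : A) l f : sumL (a :: l) f = f a + sumL l f.
Proof. reflexivity. Qed.
Lemma sumL_app {A} (l1 l2 : list A) f : sumL (l1 ++ l2) f = sumL l1 f + sumL l2 f.
Proof. induction l1; simpl; [lra|]. unfold sumL in *; simpl. rewrite IHl1; lra. Qed.
Lemma sumL_ext {A} (l : list A) f g : (forall x, In x l -> f x = g x) -> sumL l f = sumL l g.
Proof. induction l; intros H; [reflexivity|]. unfold sumL in *; simpl.
  rewrite H by (left; auto). rewrite IHl; auto. intros; apply H; right; auto. Qed.
Lemma sumL_le {A} (l : list A) f g : (forall x, In x l -> f x <= g x) -> sumL l f <= sumL l g.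
Proof. induction l; intros H; unfold sumL in *; simpl; [lra|].
  assert (f a <= g a) by (apply H; left; auto).
  assert (fold_right (fun a0 acc => f a0 + acc) 0 l <= fold_right (fun a0 acc => g a0 + acc) 0 l)
    by (apply IHl; intros; apply H; right; auto). lra. Qed.
Lemma sumL_plus {A} (l : list A) f g : sumL l (fun x => f x + g x) = sumL l f + sumL l g.
Proof. induction l; unfold sumL in *; simpl; [lra|]. rewrite IHl; lra. Qed.
Lemma sumL_scal {A} (l : list A) c f : sumL l (fun x => c * f x) = c * sumL l f.
Proof. induction l; unfold sumL in *; simpl; [lra|]. rewrite IHl; lra. Qed.
Lemma sumL_scalr {A} (l : list A) c f : sumL l (fun x => f x * c) = sumL l f * c.
Proof. induction l; unfold sumL in *; simpl; [lra|]. rewrite IHl; lra. Qed.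
Lemma sumL_zero {A} (l : list A) : sumL l (fun _ => 0) = 0.
Proof. induction l; unfold sumL in *; simpl; [lra|]. rewrite IHl; lra. Qed.
Lemma sumL_swap {A B} (l1 : list A) (l2 : list B) f :
  sumL l1 (fun a => sumL l2 (fun b => f a b)) = sumL l2 (fun b => sumL l1 (fun a => f a b)).
Proof. induction l1.
  - rewrite sumL_nil. symmetry. apply sumL_zero.
  - rewrite sumL_cons, IHl1. rewrite <- sumL_plus. apply sumL_ext. intros; rewrite sumL_cons; auto. Qed.
Lemma sumL_map {A B} (h : A -> B) l f : sumL (map h l) f = sumL l (fun x => f (h x)).
Proof. induction l; auto. simpl map. rewrite !sumL_cons, IHl; auto. Qed.

Lemma sumL_ind (l : list Z) y f : NoDup l ->
  sumL l (fun s => if Z.eqb s y then f s else 0) = if in_dec Z.eq_dec y l then f y else 0.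
Proof.
  induction l as [|a l IH]; intros Hn; [reflexivity|].
  inversion Hn; subst. rewrite sumL_cons, IH by auto.
  destruct (in_dec Z.eq_dec y (a :: l)) as [Hi|Hi];
  destruct (in_dec Z.eq_dec y l) as [Hj|Hj]; simpl in Hi;
  destruct (Z.eqb_spec a y); subst; try tauto; try lra.

Qed.

Lemma Zrange_In zeta s : In s (Zrange zeta) <-> in_box zeta s = true.
Proof.
  unfold Zrange, in_box. rewrite in_map_iff. rewrite Z.leb_le. split.
  - intros [k [Hk Hin]]. apply in_seq in Hin. lia.
  - intros H. exists (Z.to_nat (s + Z.of_nat zeta)). split; [lia|]. apply in_seq. lia.
Qed.

Lemma Zrange_NoDup zeta : NoDup (Zrange zeta).
Proof.
  unfold Zrange. apply NoDup_map_NoDup_ForallPairs; [|apply seq_NoDup].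
  intros x y _ _ H. lia.
Qed.

Fixpoint E (n : nat) (g : Z -> R) : R :=
  match n with
  | O => g 0%Z
  | S n' => (E n' (fun x => g (x + 1)%Z) + E n' (fun x => g (x - 1)%Z)) / 2
  end.

Lemma E_ext n : forall g h, (forall x, g x = h x) -> E n g = E n h.
Proof. induction n; intros g h H; simpl; auto.
  rewrite (IHn _ (fun x => h (x+1)%Z)), (IHn (fun x => g (x-1)%Z) (fun x => h (x-1)%Z)); auto. Qed.
Lemma E_le n : forall g h, (forall x, g x <= h x) -> E n g <= E n h.
Proof. induction n; intros g h H; simpl; auto.
  assert (E n (fun x => g (x+1)%Z) <= E n (fun x => h (x+1)%Z)) by (apply IHn; auto).
  assert (E n (fun x => g (x-1)%Z) <= E n (fun x => h (x-1)%Z)) by (apply IHn; auto). lra. Qed.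
Lemma E_const n : forall c, E n (fun _ => c) = c.
Proof. induction n; intros; simpl; auto. rewrite !IHn. lra. Qed.
Lemma E_lin n : forall a b g h, E n (fun x => a * g x + b * h x) = a * E n g + b * E n h.
Proof. induction n; intros; simpl; auto.
  rewrite (IHn a b (fun x => g (x+1)%Z) (fun x => h (x+1)%Z)).
  rewrite (IHn a b (fun x => g (x-1)%Z) (fun x => h (x-1)%Z)). lra. Qed.
Lemma E_scal n c g : E n (fun x => c * g x) = c * E n g.
Proof. rewrite (E_ext n _ (fun x => c * g x + 0 * g x)) by (intros; lra).
  rewrite E_lin. lra. Qed.
Lemma E_sub n c g : E n (fun x => c - g x) = c - E n g.
Proof. rewrite (E_ext n _ (fun x => c * (fun _ => 1) x + (-1) * g x)) by (intros; simpl; lra).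
  rewrite E_lin, E_const. lra. Qed.
Lemma E_nonneg n g : (forall x, 0 <= g x) -> 0 <= E n g.
Proof. intros H. rewrite <- (E_const n 0). apply E_le; auto. Qed.
Lemma E_head n : forall g, (forall x, 0 <= g x) -> E n g >= g (Z.of_nat n) / 2 ^ n.
Proof. induction n; intros g H; simpl.
  - lra.
  - assert (E n (fun x => g (x+1)%Z) >= g (Z.of_nat n + 1)%Z / 2 ^ n) by (apply IHn; auto).
    assert (0 <= E n (fun x => g (x-1)%Z)) by (apply E_nonneg; auto).
    replace (Z.pos (Pos.of_succ_nat n)) with (Z.of_nat n + 1)%Z by lia.
    assert (0 < 2 ^ n) by (apply pow_lt; lra).
    unfold Rdiv in *. rewrite Rinv_mult. nra.
Qed.
Lemma E_tail n : forall g, (forall x, 0 <= g x) -> E n g >= g (- Z.of_nat n)%Z / 2 ^ n.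
Proof. induction n; intros g H; simpl.
  - lra.
  - assert (E n (fun x => g (x-1)%Z) >= g (- Z.of_nat n - 1)%Z / 2 ^ n) by (apply IHn; auto).
    assert (0 <= E n (fun x => g (x+1)%Z)) by (apply E_nonneg; auto).
    replace (Z.neg (Pos.of_succ_nat n)) with (- Z.of_nat n - 1)%Z by lia.
    assert (0 < 2 ^ n) by (apply pow_lt; lra).
    unfold Rdiv in *. rewrite Rinv_mult. nra.
Qed.

Definition Up n (a : Z) := E n (fun x => if (a <=? x)%Z then 1 else 0).
Lemma Up_S n a : Up (S n) a = (Up n (a - 1) + Up n (a + 1)) / 2.
Proof. unfold Up; simpl. f_equal. f_equal; apply E_ext; intros x.
  - destruct (Z.leb_spec a (x+1)); destruct (Z.leb_spec (a-1) x); lia || lra.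
  - destruct (Z.leb_spec a (x-1)); destruct (Z.leb_spec (a+1) x); lia || lra. Qed.
Lemma Up_compl n : forall a, Up n a + Up n (1 - a) = 1.
Proof. induction n; intros a.
  - unfold Up; cbn [E]. destruct (Z.leb_spec a 0); destruct (Z.leb_spec (1-a) 0); lia || lra.
  - rewrite !Up_S. pose proof (IHn (a-1)%Z). pose proof (IHn (a+1)%Z).
    replace (1 - (a-1))%Z with (1 - a + 1)%Z in * by lia.
    replace (1 - (a+1))%Z with (1 - a - 1)%Z in * by lia. lra. Qed.
Lemma Up_mono n a b : (a <= b)%Z -> Up n b <= Up n a.
Proof. intros H. unfold Up. apply E_le. intros x.
  destruct (Z.leb_spec a x); destruct (Z.leb_spec b x); lia || lra. Qed.
Lemma Up_nonneg n a : 0 <= Up n a.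
Proof. unfold Up. apply E_nonneg. intros x; destruct (a <=? x)%Z; lra. Qed.
Lemma Up_bound n : forall a : nat, (a <= n)%nat -> Up n (Z.of_nat a) >= / 2 ^ (a + 1).
Proof. induction n; intros a Ha.
  - replace a with 0%nat by lia. unfold Up; simpl. lra.
  - destruct a as [|a].
    + pose proof (Up_compl (S n) 0). pose proof (Up_mono (S n) 0 1 ltac:(lia)). simpl in *. lra.
    + rewrite Up_S. pose proof (IHn a ltac:(lia)). pose proof (Up_nonneg n (Z.of_nat (S a) + 1)).
      replace (Z.of_nat (S a) - 1)%Z with (Z.of_nat a) by lia.
      replace (S a + 1)%nat with (S (a + 1)) by lia. simpl pow. rewrite Rinv_mult. lra.
Qed.
Definition Lo n (a : Z) := E n (fun x => if (x <=? - a)%Z then 1 else 0).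
Lemma Lo_Up n : forall a, Lo n a = Up n a.
Proof. induction n; intros a.
  - unfold Lo, Up; cbn [E]. destruct (Z.leb_spec 0 (-a)); destruct (Z.leb_spec a 0); lia || lra.
  - rewrite Up_S. rewrite <- !IHn.
    assert (E1 : E n (fun x => if (x + 1 <=? - a)%Z then 1 else 0) = Lo n (a+1)).
    { unfold Lo; apply E_ext; intros x.
      destruct (Z.leb_spec (x+1) (-a)); destruct (Z.leb_spec x (-(a+1))); lia || lra. }
    assert (E2 : E n (fun x => if (x - 1 <=? - a)%Z then 1 else 0) = Lo n (a-1)).
    { unfold Lo; apply E_ext; intros x.
      destruct (Z.leb_spec (x-1) (-a)); destruct (Z.leb_spec x (-(a-1))); lia || lra. }
    unfold Lo at 1; cbn [E]. rewrite E1, E2. lra. Qed.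

Lemma C_n0 n : Binomial.C n 0 = 1.
Proof. unfold Binomial.C. rewrite Nat.sub_0_r. change (INR (fact 0)) with 1. field. apply INR_fact_neq_0. Qed.
Lemma C_nn n : Binomial.C n n = 1.
Proof. unfold Binomial.C. rewrite Nat.sub_diag. change (INR (fact 0)) with 1. field. apply INR_fact_neq_0. Qed.

Lemma seq_0S n : seq 0 (S n) = 0%nat :: map S (seq 0 n).
Proof. simpl. rewrite seq_shift. reflexivity. Qed.

Lemma binom_split n f :
  sumL (seq 0 (S (S n))) (fun j => Binomial.C (S n) j * f j) =
  sumL (seq 0 (S n)) (fun j => Binomial.C n j * f j) +
  sumL (seq 0 (S n)) (fun j => Binomial.C n j * f (S j)).
Proof.
  assert (A : forall m (F : nat -> R), sumL (seq 0 (S m)) F = F 0%nat + sumL (seq 0 m) (fun k => F (S k))).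
  { intros m F. rewrite seq_0S, sumL_cons, sumL_map. reflexivity. }
  assert (B : forall m (F : nat -> R), sumL (seq 0 (S m)) F = sumL (seq 0 m) F + F m).
  { intros m F. rewrite seq_S, sumL_app. simpl (0 + m)%nat. rewrite sumL_cons, sumL_nil. ring. }
  rewrite A. rewrite (B n (fun k => Binomial.C (S n) (S k) * f (S k))).
  rewrite (A n (fun j => Binomial.C n j * f j)).
  rewrite (B n (fun j => Binomial.C n j * f (S j))).
  rewrite !C_n0, !C_nn.
  rewrite (sumL_ext (seq 0 n) (fun x => Binomial.C (S n) (S x) * f (S x))
     (fun x => Binomial.C n x * f (S x) + Binomial.C n (S x) * f (S x))).
  2:{ intros x Hx. apply in_seq in Hx. rewrite <- pascal by lia. ring. }
  rewrite sumL_plus. ring.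
Qed.

Definition Bsum n (g : Z -> R) :=
  sumL (seq 0 (S n)) (fun j => Binomial.C n j / 2 ^ n * g (2 * Z.of_nat j - Z.of_nat n)%Z).

Lemma Bsum_E n : forall g, Bsum n g = E n g.
Proof.
  induction n; intros g.
  - unfold Bsum. simpl. unfold sumL; simpl. rewrite C_n0. lra.
  - cbn [E]. rewrite <- !IHn. unfold Bsum.
    rewrite (sumL_ext _ _ (fun j => Binomial.C (S n) j * (g (2 * Z.of_nat j - Z.of_nat (S n))%Z / 2 ^ (S n))))
      by (intros; unfold Rdiv; ring).
    rewrite binom_split.
    rewrite (sumL_ext (seq 0 (S n)) (fun j => Binomial.C n j * (g (2 * Z.of_nat j - Z.of_nat (S n))%Z / 2 ^ S n))
       (fun j => / 2 * (Binomial.C n j / 2 ^ n * g (2 * Z.of_nat j - Z.of_nat n - 1)%Z))).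
    2:{ intros. replace (2 * Z.of_nat x - Z.of_nat (S n))%Z with (2 * Z.of_nat x - Z.of_nat n - 1)%Z by lia.
        simpl pow. field. apply pow_nonzero; lra. }
    rewrite (sumL_ext (seq 0 (S n)) (fun j => Binomial.C n j * (g (2 * Z.of_nat (S j) - Z.of_nat (S n))%Z / 2 ^ S n))
       (fun j => / 2 * (Binomial.C n j / 2 ^ n * g (2 * Z.of_nat j - Z.of_nat n + 1)%Z))).
    2:{ intros. replace (2 * Z.of_nat (S x) - Z.of_nat (S n))%Z with (2 * Z.of_nat x - Z.of_nat n + 1)%Z by lia.
        simpl pow. field. apply pow_nonzero; lra. }
    rewrite !sumL_scal. lra.
Qed.

Lemma sum_ind_box zeta y f :
  sumL (Zrange zeta) (fun s => if Z.eqb s y then f s else 0) = if in_box zeta y then f y else 0.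
Proof.
  rewrite sumL_ind by apply Zrange_NoDup.
  destruct (in_dec Z.eq_dec y (Zrange zeta)) as [H|H]; apply Zrange_In in H || rewrite Zrange_In in H.
  - rewrite H; auto.
  - destruct (in_box zeta y); [tauto|auto].
Qed.

Lemma trans_sum zeta wk pi s h :
  sumL (Zrange zeta) (fun s' => trans wk pi s s' * h s') =
  E (wk s) (fun x => if in_box zeta (s + pi s + x)%Z then h (s + pi s + x)%Z else 0).
Proof.
  rewrite <- Bsum_E. unfold trans, Bsum.
  rewrite (sumL_ext (Zrange zeta) _ (fun s' => sumL (seq 0 (wk s + 1))
     (fun j => if Z.eqb s' (s + pi s + (2 * Z.of_nat j - Z.of_nat (wk s)))%Z
               then Binomial.C (wk s) j / 2 ^ wk s * h s' else 0))).
  2:{ intros s' _. rewrite <- sumL_scalr. apply sumL_ext. intros j _.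
      replace (s + pi s + 2 * Z.of_nat j - Z.of_nat (wk s))%Z
        with (s + pi s + (2 * Z.of_nat j - Z.of_nat (wk s)))%Z by ring.
      destruct (Z.eqb _ _); ring. }
  rewrite sumL_swap. rewrite Nat.add_1_r. apply sumL_ext. intros j _.
  rewrite sum_ind_box. destruct (in_box _ _); ring.
Qed.

Lemma dist_out zeta wk pi s0 t s : in_box zeta s0 = true -> in_box zeta s = false ->
  dist zeta wk pi s0 t s = 0.
Proof. intros H0 H. destruct t; simpl.
  - destruct (Z.eqb_spec s s0); subst; congruence || auto.
  - rewrite H; auto. Qed.

Lemma dist_S zeta wk pi s0 t s : dist zeta wk pi s0 (S t) s =
  if in_box zeta s then sumL (Zrange zeta) (fun u => dist zeta wk pi s0 t u * trans wk pi u s) else 0.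
Proof. reflexivity. Qed.

Lemma dist_back zeta wk pi s0 : in_box zeta s0 = true -> forall j s,
  dist zeta wk pi s0 (S j) s = sumL (Zrange zeta) (fun s' => trans wk pi s0 s' * dist zeta wk pi s' j s).
Proof.
  intros H0 j. induction j; intros s.
  - cbn [dist].
    rewrite (sumL_ext (Zrange zeta) (fun u => (if Z.eqb u s0 then 1 else 0) * trans wk pi u s)
      (fun u => if Z.eqb u s0 then trans wk pi u s else 0)) by (intros; destruct (Z.eqb _ _); ring).
    rewrite sum_ind_box, H0.
    rewrite (sumL_ext (Zrange zeta) (fun s' => trans wk pi s0 s' * (if Z.eqb s s' then 1 else 0))
      (fun s' => if Z.eqb s' s then trans wk pi s0 s' else 0)).
    2:{ intros. rewrite Z.eqb_sym. destruct (Z.eqb _ _); ring. }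
    rewrite sum_ind_box. reflexivity.
  - rewrite (dist_S zeta wk pi s0 (S j) s).
    rewrite (sumL_ext (Zrange zeta) (fun s' => trans wk pi s0 s' * dist zeta wk pi s' (S j) s)
      (fun s' => trans wk pi s0 s' * (if in_box zeta s then sumL (Zrange zeta) (fun u => dist zeta wk pi s' j u * trans wk pi u s) else 0)))
      by (intros; rewrite dist_S; reflexivity).
    destruct (in_box zeta s).
    + rewrite (sumL_ext _ _ (fun u => sumL (Zrange zeta) (fun s' => trans wk pi s0 s' * dist zeta wk pi s' j u * trans wk pi u s))).
      2:{ intros u _. rewrite (IHj u), <- sumL_scalr. reflexivity. }
      rewrite sumL_swap. apply sumL_ext. intros s' _. rewrite <- sumL_scal. apply sumL_ext. intros; ring.
    + symmetry. rewrite (sumL_ext _ _ (fun _ => 0)) by (intros; ring). apply sumL_zero.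
Qed.

Lemma surv_S zeta wk pi s j : in_box zeta s = true ->
  survival zeta wk pi s (S j) =
  E (wk s) (fun x => if in_box zeta (s + pi s + x)%Z then survival zeta wk pi (s + pi s + x)%Z j else 0).
Proof.
  intros H. transitivity (sumL (Zrange zeta) (fun s' => trans wk pi s s' * survival zeta wk pi s' j));
  [| apply (trans_sum zeta wk pi s (fun y => survival zeta wk pi y j))]. unfold survival.
  rewrite (sumL_ext _ _ _ (fun x _ => dist_back zeta wk pi s H j x)).
  rewrite sumL_swap. apply sumL_ext. intros; apply sumL_scal.
Qed.

Lemma surv_0 zeta wk pi s : in_box zeta s = true -> survival zeta wk pi s 0 = 1.
Proof. intros H. unfold survival. cbn [dist].
  rewrite (sum_ind_box zeta s (fun _ => 1)), H. auto. Qed.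

Lemma surv_bounds zeta wk pi j : forall s, in_box zeta s = true ->
  0 <= survival zeta wk pi s j <= 1.
Proof.
  induction j; intros s H.
  - rewrite surv_0 by auto. lra.
  - rewrite surv_S by auto. split.
    + apply E_nonneg. intros x. destruct (in_box zeta (s + pi s + x)) eqn:E1; [apply (IHj _ E1)|lra].
    + rewrite <- (E_const (wk s) 1). apply E_le. intros x. destruct (in_box zeta (s + pi s + x)) eqn:E1; [apply (IHj _ E1)|lra].
Qed.

Lemma inv2_pos a : 0 < / 2 ^ a.
Proof. apply Rinv_0_lt_compat, pow_lt; lra. Qed.
Lemma inv2_le a b : (a <= b)%nat -> / 2 ^ b <= / 2 ^ a.
Proof. intros H. apply Rinv_le_contravar; [apply pow_lt; lra|]. apply Rle_pow; lra || auto. Qed.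
Lemma inv2_add a b : / 2 ^ (a + b) = / 2 ^ a * / 2 ^ b.
Proof. rewrite pow_add, Rinv_mult. auto. Qed.

Lemma step_avoid n g h : (forall x, g x <= 1 - h x) -> 1 - E n g >= E n h.
Proof. intros H. assert (E n g <= E n (fun x => 1 - h x)) by (apply E_le; auto).
  rewrite E_sub in H0. lra. Qed.

Lemma E_point n eps h : (eps = 1 \/ eps = -1)%Z -> (forall x, 0 <= h x) ->
  E n h >= h (eps * Z.of_nat n)%Z / 2 ^ n.
Proof. intros [-> | ->] H.
  - rewrite Z.mul_1_l. apply E_head; auto.
  - replace (-1 * Z.of_nat n)%Z with (- Z.of_nat n)%Z by ring. apply E_tail; auto. Qed.

Lemma E_exit n eps (a : nat) : (eps = 1 \/ eps = -1)%Z -> (a <= n)%nat ->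
  E n (fun x => if (Z.of_nat a <=? eps * x)%Z then 1 else 0) >= / 2 ^ (a + 1).
Proof. intros [-> | ->] H.
  - pose proof (Up_bound n a H). unfold Up in H0.
    rewrite (E_ext n _ (fun x => if (Z.of_nat a <=? x)%Z then 1 else 0)); auto.
    intros; rewrite Z.mul_1_l; auto.
  - pose proof (Up_bound n a H). rewrite <- Lo_Up in H0. unfold Lo in H0.
    rewrite (E_ext n _ (fun x => if (x <=? - Z.of_nat a)%Z then 1 else 0)); auto.
    intros x. destruct (Z.leb_spec (Z.of_nat a) (-1 * x)); destruct (Z.leb_spec x (- Z.of_nat a)); lia || lra.
Qed.

Lemma box_iff zeta y : in_box zeta y = true <-> (- Z.of_nat zeta <= y <= Z.of_nat zeta)%Z.
Proof. unfold in_box. rewrite Z.leb_le. lia. Qed.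
Lemma box_false zeta y : in_box zeta y = false <-> ~ (- Z.of_nat zeta <= y <= Z.of_nat zeta)%Z.
Proof. unfold in_box. rewrite Z.leb_gt. lia. Qed.

Lemma core zeta (wk : Z -> nat) pi w eps (Hw : (1 < w)%nat) (Hwk : forall k, (w <= wk k)%nat)
  (Hpi : forall k : Z, pi k = (-1)%Z \/ pi k = 0%Z \/ pi k = 1%Z) (Heps : (eps = 1 \/ eps = -1)%Z) :
  forall j d s, in_box zeta s = true -> Z.of_nat d = (Z.of_nat zeta + 1 - eps * s)%Z ->
  (d <= j * (w - 1))%nat -> 1 - survival zeta wk pi s j >= / 2 ^ (d + j + 1).
Proof.
  induction j; intros d s Hs Hd Hdj.
  - exfalso. apply box_iff in Hs. destruct Heps; subst; lia.
  - rewrite surv_S by auto.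
    set (n := wk s).
    assert (Hn : (w <= n)%nat) by apply Hwk.
    assert (Hpe : (-1 <= eps * pi s <= 1)%Z) by (destruct Heps; destruct (Hpi s) as [->|[->| ->]]; subst; lia).
    pose proof (box_iff zeta s) as Hbs. apply Hbs in Hs as Hs'.
    set (g := fun x => if in_box zeta (s + pi s + x)%Z then survival zeta wk pi (s + pi s + x)%Z j else 0).
    assert (Hg : forall x, 0 <= g x <= 1).
    { intros x; unfold g. destruct (in_box zeta (s + pi s + x)) eqn:E1; [apply surv_bounds; auto|lra]. }
    destruct (le_lt_dec (d + 1) n) as [Hbig|Hsmall].
    + eapply Rge_trans. apply (step_avoid n g (fun x => if (Z.of_nat (d + 1) <=? eps * x)%Z then 1 else 0)).
      * intros x. destruct (Z.leb_spec (Z.of_nat (d + 1)) (eps * x)) as [Hx|Hx].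
        -- unfold g. replace (in_box zeta (s + pi s + x)) with false; [lra|].
           symmetry. apply box_false. destruct Heps; subst; lia.
        -- specialize (Hg x). lra.
      * eapply Rge_trans. apply E_exit; auto. apply Rle_ge, inv2_le. lia.
    + set (x0 := (eps * Z.of_nat n)%Z).
      destruct (in_box zeta (s + pi s + x0)) eqn:Hy.
      * set (y0 := (s + pi s + x0)%Z) in *.
        assert (Hy' := Hy). apply box_iff in Hy'.
        set (d' := Z.to_nat (Z.of_nat zeta + 1 - eps * y0)).
        assert (Hd' : Z.of_nat d' = (Z.of_nat zeta + 1 - eps * y0)%Z).
        { unfold d'. rewrite Z2Nat.id; auto. destruct Heps; subst; lia. }
        assert (Hd'2 : (d' + n <= d + 1)%nat).
        { assert (eps * y0 = eps * s + eps * pi s + Z.of_nat n)%Z.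
          { unfold y0, x0. destruct Heps; subst; ring. } lia. }
        assert (Hd'3 : (d' <= j * (w - 1))%nat). { rewrite Nat.mul_succ_l in Hdj. lia. }
        pose proof (IHj d' y0 Hy Hd' Hd'3) as IH.
        eapply Rge_trans. apply (step_avoid n g (fun x => if (x =? x0)%Z then 1 - survival zeta wk pi y0 j else 0)).
        { intros x. destruct (Z.eqb_spec x x0).
          - subst x. unfold g. fold y0. rewrite Hy. lra.
          - specialize (Hg x). lra. }
        eapply Rge_trans. apply (E_point n eps); auto.
        { intros x. destruct (x =? x0)%Z; [|lra]. pose proof (surv_bounds zeta wk pi j y0 Hy). lra. }
        cbv beta. fold x0. rewrite Z.eqb_refl.
        apply Rle_ge. unfold Rdiv. 
        apply Rle_trans with (/ 2 ^ (d' + j + 1) * / 2 ^ n).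
        { rewrite <- inv2_add. apply inv2_le. lia. }
        apply Rmult_le_compat_r; [left; apply inv2_pos|]. lra.
      * eapply Rge_trans. apply (step_avoid n g (fun x => if (x =? x0)%Z then 1 else 0)).
        { intros x. destruct (Z.eqb_spec x x0).
          - subst x. unfold g. rewrite Hy. lra.
          - specialize (Hg x). lra. }
        eapply Rge_trans. apply (E_point n eps); auto.
        { intros x. destruct (x =? x0)%Z; lra. }
        cbv beta. fold x0. rewrite Z.eqb_refl. apply Rle_ge. unfold Rdiv. rewrite Rmult_1_l. apply inv2_le. lia.
Qed.

Lemma arith zeta w : (1 < w)%nat ->
  let q0 := (zeta / (w - 1))%nat in
  (zeta + 1 <= (q0 + 1) * (w - 1))%nat /\ (zeta + 1 + (q0 + 1) <= w * (q0 + 1))%nat /\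
  (zeta + 1 <= q0 * (w - 1) + w)%nat.
Proof.
  intros Hw q0. pose proof (Nat.div_mod zeta (w - 1) ltac:(lia)) as H1.
  pose proof (Nat.mod_upper_bound zeta (w - 1) ltac:(lia)) as H2.
  fold q0 in H1. set (r := (zeta mod (w - 1))%nat) in *.
  destruct w as [|w']; [lia|]. replace (S w' - 1)%nat with w' in * by lia. nia.
Qed.

Lemma window zeta (wk : Z -> nat) pi w (Hw : (1 < w)%nat) (Hwk : forall k, (w <= wk k)%nat)
  (Hpi : forall k : Z, pi k = (-1)%Z \/ pi k = 0%Z \/ pi k = 1%Z) s :
  in_box zeta s = true ->
  1 - survival zeta wk pi s (zeta / (w - 1) + 1) >= / 2 ^ (w * (zeta / (w - 1) + 1)).
Proof.
  intros Hs. destruct (arith zeta w Hw) as [F1 [F2 F3]].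
  set (q0 := (zeta / (w - 1))%nat) in *.
  pose proof (box_iff zeta s) as Hbs. apply Hbs in Hs as Hs'.
  destruct (Z.eq_dec s 0) as [Hs0|Hs0].
  - subst s. set (eps := if (0 <=? pi 0%Z)%Z then 1%Z else (-1)%Z).
    assert (Heps : (eps = 1 \/ eps = -1)%Z) by (unfold eps; destruct (0 <=? pi 0%Z)%Z; auto).
    assert (Hpe : (0 <= eps * pi 0%Z <= 1)%Z).
    { unfold eps. destruct (Z.leb_spec 0 (pi 0%Z)); destruct (Hpi 0%Z) as [E1|[E1|E1]]; rewrite ?E1 in *; lia. }
    clearbody eps.
    rewrite Nat.add_1_r. rewrite surv_S by auto.
    set (n := wk 0%Z). assert (Hn : (w <= n)%nat) by apply Hwk.
    set (g := fun x => if in_box zeta (0 + pi 0 + x)%Z then survival zeta wk pi (0 + pi 0 + x)%Z q0 else 0).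
    assert (Hg : forall x, 0 <= g x <= 1).
    { intros x; unfold g. destruct (in_box zeta (0 + pi 0 + x)%Z) eqn:E1; [apply surv_bounds; auto|lra]. }
    destruct (le_lt_dec (zeta + 1) n) as [Hbig|Hsmall].
    + eapply Rge_trans. apply (step_avoid n g (fun x => if (Z.of_nat (zeta + 1) <=? eps * x)%Z then 1 else 0)).
      * intros x. destruct (Z.leb_spec (Z.of_nat (zeta + 1)) (eps * x)) as [Hx|Hx].
        -- unfold g. replace (in_box zeta (0 + pi 0 + x)%Z) with false; [lra|].
           symmetry. apply box_false. destruct Heps; subst; lia.
        -- specialize (Hg x). lra.
      * eapply Rge_trans. apply E_exit; auto. apply Rle_ge, inv2_le. lia.
    + set (x0 := (eps * Z.of_nat n)%Z).
      destruct (in_box zeta (0 + pi 0 + x0)%Z) eqn:Hy.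
      * set (y0 := (0 + pi 0 + x0)%Z) in *.
        assert (Hy' := Hy). apply box_iff in Hy'.
        set (d' := Z.to_nat (Z.of_nat zeta + 1 - eps * y0)).
        assert (Hd' : Z.of_nat d' = (Z.of_nat zeta + 1 - eps * y0)%Z).
        { unfold d'. rewrite Z2Nat.id; auto. destruct Heps; subst; lia. }
        assert (Hd'2 : (d' + n <= zeta + 1)%nat).
        { assert (eps * y0 = eps * pi 0 + Z.of_nat n)%Z.
          { unfold y0, x0. destruct Heps; subst; ring. } lia. }
        assert (Hd'3 : (d' <= q0 * (w - 1))%nat) by lia.
        pose proof (core zeta wk pi w eps Hw Hwk Hpi Heps q0 d' y0 Hy Hd' Hd'3) as IH.
        eapply Rge_trans. apply (step_avoid n g (fun x => if (x =? x0)%Z then 1 - survival zeta wk pi y0 q0 else 0)).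
        { intros x. destruct (Z.eqb_spec x x0).
          - subst x. unfold g. fold y0. rewrite Hy. lra.
          - specialize (Hg x). lra. }
        eapply Rge_trans. apply (E_point n eps); auto.
        { intros x. destruct (x =? x0)%Z; [|lra]. pose proof (surv_bounds zeta wk pi q0 y0 Hy). lra. }
        cbv beta. fold x0. rewrite Z.eqb_refl.
        apply Rle_ge. unfold Rdiv.
        apply Rle_trans with (/ 2 ^ (d' + q0 + 1) * / 2 ^ n).
        { rewrite <- inv2_add. apply inv2_le. nia. }
        apply Rmult_le_compat_r; [left; apply inv2_pos|]. lra.
      * eapply Rge_trans. apply (step_avoid n g (fun x => if (x =? x0)%Z then 1 else 0)).
        { intros x. destruct (Z.eqb_spec x x0).
          - subst x. unfold g. rewrite Hy. lra.
          - specialize (Hg x). lra. }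
        eapply Rge_trans. apply (E_point n eps); auto.
        { intros x. destruct (x =? x0)%Z; lra. }
        cbv beta. fold x0. rewrite Z.eqb_refl. apply Rle_ge. unfold Rdiv. rewrite Rmult_1_l. apply inv2_le. nia.
  - set (eps := if (0 <? s)%Z then 1%Z else (-1)%Z).
    assert (Heps : (eps = 1 \/ eps = -1)%Z) by (unfold eps; destruct (0 <? s)%Z; auto).
    assert (Hes : (1 <= eps * s)%Z).
    { unfold eps. destruct (Z.ltb_spec 0 s); lia. }
    clearbody eps.
    set (d := Z.to_nat (Z.of_nat zeta + 1 - eps * s)).
    assert (Hd : Z.of_nat d = (Z.of_nat zeta + 1 - eps * s)%Z).
    { unfold d. rewrite Z2Nat.id; auto. destruct Heps; subst; lia. }
    assert (Hdj : (d <= (q0 + 1) * (w - 1))%nat) by lia.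
    pose proof (core zeta wk pi w eps Hw Hwk Hpi Heps (q0 + 1) d s Hs Hd Hdj) as IH.
    eapply Rge_trans; [exact IH|]. apply Rle_ge, inv2_le. lia.
Qed.

Lemma surv_mult zeta wk pi b M : 0 <= M ->
  (forall u, in_box zeta u = true -> survival zeta wk pi u b <= M) ->
  forall a s, in_box zeta s = true ->
  survival zeta wk pi s (a + b) <= M * survival zeta wk pi s a.
Proof.
  intros HM HB a. induction a; intros s Hs.
  - simpl. rewrite surv_0 by auto. rewrite Rmult_1_r. auto.
  - simpl (S a + b)%nat. rewrite !surv_S by auto. rewrite <- E_scal. apply E_le. intros x.
    destruct (in_box zeta (s + pi s + x)) eqn:E1; [apply IHa; auto|lra].
Qed.

Theorem lemma4 (zeta : nat) (w : nat) (wk : Z -> nat) (pi : Z -> Z)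
  (Hzeta : (0 < zeta)%nat) (Hw : (1 < w)%nat)
  (Hwk : forall k : Z, (w <= wk k)%nat)
  (Hpi : forall k : Z, pi k = (-1)%Z \/ pi k = 0%Z \/ pi k = 1%Z) :
  let tau := (zeta / (w - 1) + 1)%nat in
  exists C : R, 0 < C /\
    forall (sigma : R),
      Rpower (1 - / 2 ^ (w * tau)) (/ INR tau) < sigma ->
      forall (t : nat) (s0 : Z),
        (- Z.of_nat zeta <= s0 <= Z.of_nat zeta)%Z ->
        survival zeta wk pi s0 t <= C * sigma ^ t.
Proof.
  intros tau.
  set (q := / 2 ^ (w * tau)).
  assert (Hq : 0 < q < 1).
  { split; [apply inv2_pos|]. unfold q. rewrite <- Rinv_1. apply Rinv_lt_contravar.
    - rewrite Rmult_1_l. apply pow_lt; lra.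
    - replace 1 with (2 ^ 0) by reflexivity. apply Rlt_pow; [lra|]. unfold tau. nia. }
  assert (Htau : (0 < tau)%nat) by (unfold tau; lia).
  assert (Hwin : forall m r s, in_box zeta s = true -> survival zeta wk pi s (m * tau + r) <= (1 - q) ^ m).
  { induction m; intros r s Hs.
    - simpl. apply surv_bounds; auto.
    - replace (S m * tau + r)%nat with (tau + (m * tau + r))%nat by lia.
      eapply Rle_trans. apply (surv_mult zeta wk pi (m * tau + r) ((1 - q) ^ m)); auto.
      { apply pow_le; lra. }
      pose proof (window zeta wk pi w Hw Hwk Hpi s Hs) as HW. fold tau in HW. fold q in HW.
      simpl pow. pose proof (pow_le (1 - q) m ltac:(lra)). nra. }
  exists (/ (1 - q)). split; [apply Rinv_0_lt_compat; lra|].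
  intros sigma Hsig t s0 Hs0.
  apply box_iff in Hs0.
  set (rho := Rpower (1 - q) (/ INR tau)) in *.
  assert (Hrho0 : 0 < rho) by (unfold rho, Rpower; apply exp_pos).
  assert (Hrho1 : rho <= 1).
  { apply Rle_trans with (Rpower 1 (/ INR tau)).
    - unfold rho. apply Rle_Rpower_l; [left; apply Rinv_0_lt_compat, lt_0_INR; lia | lra].
    - unfold Rpower. rewrite ln_1, Rmult_0_r, exp_0. lra. }
  assert (Hrt : rho ^ tau = 1 - q).
  { unfold rho. rewrite <- Rpower_pow by (unfold Rpower; apply exp_pos). rewrite Rpower_mult.
    rewrite Rinv_l by (apply not_0_INR; lia). apply Rpower_1. lra. }
  pose proof (Nat.div_mod t tau ltac:(lia)) as Hdm.
  pose proof (Nat.mod_upper_bound t tau ltac:(lia)) as Hr.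
  set (m := (t / tau)%nat) in *. set (r := (t mod tau)%nat) in *.
  assert (Hs : survival zeta wk pi s0 t <= (1 - q) ^ m).
  { rewrite Hdm. replace (tau * m + r)%nat with (m * tau + r)%nat by lia. apply Hwin; auto. }
  assert (Hst : rho ^ t <= sigma ^ t) by (apply pow_incr; lra).
  assert (Hrr : 1 - q <= rho ^ r).
  { rewrite <- Hrt. replace tau with (r + (tau - r))%nat by lia. rewrite pow_add.
    assert (rho ^ (tau - r) <= 1) by (rewrite <- (pow1 (tau - r)); apply pow_incr; lra).
    pose proof (pow_le rho r ltac:(lra)). nra. }
  assert (Hrt2 : rho ^ t = (1 - q) ^ m * rho ^ r).
  { rewrite Hdm, pow_add, pow_mult, Hrt. reflexivity. }
  apply Rle_trans with ((1 - q) ^ m); auto.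
  apply Rmult_le_reg_l with (1 - q); [lra|].
  rewrite <- Rmult_assoc, Rinv_r, Rmult_1_l by lra.
  pose proof (pow_le (1 - q) m ltac:(lra)). nra.
Qed.
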